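(* Let $X$ be a CAT(0) space, $T_n:X\to X$ for $n\in\mathbb{N}$, and $(\gamma_n)$ a sequence of positive reals. If $(T_n)$ is jointly firmly nonexpansive with respect to $(\gamma_n)$, then $(T_n)$ is jointly $(P_2)$ with respect to $(\gamma_n)$.
   Context: A geodesic space $(X,d)$ is CAT(0) if for all $z\in X$, all geodesics $\gamma:[a,b]\to X$ and all $t\in[0,1]$, $d^2(z,\gamma((1-t)a+tb))\le(1-t)d^2(z,\gamma(a))+td^2(z,\gamma(b))-t(1-t)d^2(\gamma(a),\gamma(b))$. CAT(0) spaces are uniquely geodesic; for $x,y\in X$ and $t\in[0,1]$, $(1-t)x+ty$ denotes the point at distance $t\,d(x,y)$ from $x$ on the geodesic from $x$ to $y$. The family $(T_n)$ is jointly firmly nonexpansive with respect to $(\gamma_n)$ if for all $n,m\in\mathbb{N}$, $x,y\in X$ and $\alpha,\beta\in[0,1]$ with $(1-\alpha)\gamma_n=(1-\beta)\gamma_m$, one has $d(T_nx,T_my)\le d((1-\alpha)x+\alpha T_nx,(1-\beta)y+\beta T_my)$. It is jointly $(P_2)$ with respect to $(\gamma_n)$ if for all $n,m\in\mathbb{N}$ and $x,y\in X$, $\frac1{\gamma_m}\big(d^2(T_nx,T_my)+d^2(y,T_my)-d^2(y,T_nx)\big)\le\frac1{\gamma_n}\big(d^2(x,T_my)-d^2(x,T_nx)-d^2(T_nx,T_my)\big)$. *)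

(* Defs.v *)
From Stdlib Require Import Reals ClassicalEpsilon.
Open Scope R_scope.

Definition is_metric {X : Type} (d : X -> X -> R) : Prop :=
  (forall x y, 0 <= d x y) /\
  (forall x y, d x y = 0 <-> x = y) /\
  (forall x y, d x y = d y x) /\
  (forall x y z, d x z <= d x y + d y z).

Definition geodesic {X : Type} (d : X -> X -> R) (g : R -> X) (a b : R) : Prop :=
  a <= b /\
  forall s t, a <= s <= b -> a <= t <= b -> d (g s) (g t) = Rabs (s - t).

Definition geodesic_space {X : Type} (d : X -> X -> R) : Prop :=
  is_metric d /\
  forall x y : X, exists g a b, geodesic d g a b /\ g a = x /\ g b = y.

Definition CAT0 {X : Type} (d : X -> X -> R) : Prop :=
  geodesic_space d /\
  forall (z : X) (g : R -> X) (a b : R), geodesic d g a b ->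
  forall t, 0 <= t <= 1 ->
    (d z (g ((1 - t) * a + t * b)))^2 <=
      (1 - t) * (d z (g a))^2 + t * (d z (g b))^2
      - t * (1 - t) * (d (g a) (g b))^2.

(* (1-t)x + ty : the point of parameter t on the (unique, in CAT(0)) geodesic
   from x to y, i.e. at distance t d(x,y) from x on that geodesic. *)
Definition convcomb {X : Type} (d : X -> X -> R) (x y : X) (t : R) : X :=
  epsilon (inhabits x) (fun p => exists g a b,
    geodesic d g a b /\ g a = x /\ g b = y /\ p = g ((1 - t) * a + t * b)).

Definition jointly_firmly_nonexpansive {X : Type} (d : X -> X -> R)
  (T : nat -> X -> X) (gam : nat -> R) : Prop :=
  forall (n m : nat) (x y : X) (al be : R),
    0 <= al <= 1 -> 0 <= be <= 1 ->
    (1 - al) * gam n = (1 - be) * gam m ->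
    d (T n x) (T m y) <= d (convcomb d x (T n x) al) (convcomb d y (T m y) be).

Definition jointly_P2 {X : Type} (d : X -> X -> R)
  (T : nat -> X -> X) (gam : nat -> R) : Prop :=
  forall (n m : nat) (x y : X),
    / gam m * ((d (T n x) (T m y))^2 + (d y (T m y))^2 - (d y (T n x))^2)
    <= / gam n * ((d x (T m y))^2 - (d x (T n x))^2 - (d (T n x) (T m y))^2).

(* Main.v *)
Require Import Defs.
From Stdlib Require Import Reals Lra Psatz ClassicalEpsilon.
Open Scope R_scope.

Lemma cat_conv (X : Type) (d : X -> X -> R) : CAT0 d ->
  forall z x y t, 0 <= t <= 1 ->
  (d z (convcomb d x y t))^2 <= (1 - t) * (d z x)^2 + t * (d z y)^2
      - t * (1 - t) * (d x y)^2.
Proof.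
  intros [[Hm Hg] Hc] z x y t Ht.
  unfold convcomb.
  destruct (Hg x y) as [g [a [b [Hgeo [Ha Hb]]]]].
  match goal with |- context [epsilon ?i ?P] =>
    assert (HP : exists p, P p) by
      (exists (g ((1 - t) * a + t * b)); exists g, a, b; auto);
    pose proof (epsilon_spec i P HP) as Hs; set (p := epsilon i P) in * end.
  destruct Hs as [g' [a' [b' [Hgeo' [Ha' [Hb' Hp]]]]]].
  rewrite Hp, <- Ha', <- Hb'. apply Hc; auto.
Qed.

Theorem proposition3p9 (X : Type) (d : X -> X -> R) (T : nat -> X -> X)
  (gam : nat -> R) :
  CAT0 d ->
  (forall n, 0 < gam n) ->
  jointly_firmly_nonexpansive d T gam ->
  jointly_P2 d T gam.
Proof.
  intros Hcat Hgam Hf n m x y.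
  assert (Hmet : is_metric d) by (destruct Hcat as [[H _] _]; exact H).
  destruct Hmet as [Hnn [_ [Hsym _]]].
  set (u := T n x). set (v := T m y).
  pose proof (Hgam n) as gn. pose proof (Hgam m) as gm.
  set (a := / gam n). set (b := / gam m).
  assert (ha : 0 < a) by (apply Rinv_0_lt_compat; lra).
  assert (hb : 0 < b) by (apply Rinv_0_lt_compat; lra).
  set (A := d u v ^ 2). set (Bxy := d x y ^ 2). set (Buy := d y u ^ 2).
  set (Bxv := d x v ^ 2). set (Bxu := d x u ^ 2). set (Byv := d y v ^ 2).
  set (D := (a + b) * A - b * Buy - a * Bxv + a * Bxu + b * Byv).
  set (K := a * b * (A + Bxy - Buy - Bxv) + a * a * Bxu + b * b * Byv).
  set (e0 := Rmin (gam n) (gam m)).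
  assert (he0 : 0 < e0) by (unfold e0; apply Rmin_glb_lt; lra).
  assert (Main : forall e, 0 < e <= e0 -> D <= e * K).
  { intros e [he1 he2].
    assert (e1 : e <= gam n) by (eapply Rle_trans; [exact he2| apply Rmin_l]).
    assert (e2 : e <= gam m) by (eapply Rle_trans; [exact he2| apply Rmin_r]).
    set (al := 1 - e * a). set (be := 1 - e * b).
    assert (hal : 0 <= al <= 1).
    { unfold al; split; [| nra].
      assert (e * a <= 1); [|lra].
      unfold a; apply (Rmult_le_reg_r (gam n)); [lra|].
      rewrite Rmult_assoc, Rinv_l; lra. }
    assert (hbe : 0 <= be <= 1).
    { unfold be; split; [| nra].
      assert (e * b <= 1); [|lra].
      unfold b; apply (Rmult_le_reg_r (gam m)); [lra|].
      rewrite Rmult_assoc, Rinv_l; lra. }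
    assert (heq : (1 - al) * gam n = (1 - be) * gam m).
    { unfold al, be, a, b. field. lra. }
    pose proof (Hf n m x y al be hal hbe heq) as H0. fold u v in H0.
    set (p := convcomb d x u al) in *. set (q := convcomb d y v be) in *.
    assert (H0' : A <= d p q ^ 2).
    { unfold A. pose proof (Hnn u v). simpl. nra. }
    pose proof (cat_conv X d Hcat p y v be hbe) as H1. fold q in H1.
    pose proof (cat_conv X d Hcat y x u al hal) as H2. fold p in H2.
    pose proof (cat_conv X d Hcat v x u al hal) as H3. fold p in H3.
    rewrite (Hsym p y), (Hsym p v) in H1.
    rewrite (Hsym y x) in H2. rewrite (Hsym v x), (Hsym v u) in H3.
    fold Bxy Buy Bxu Byv Bxv A in H1, H2, H3.
    assert (H2' := Rmult_le_compat_l (1 - be) _ _ ltac:(lra) H2).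
    assert (H3' := Rmult_le_compat_l be _ _ ltac:(lra) H3).
    assert (Hk : e * (D - e * K) <= 0).
    { unfold D, K. unfold al, be in *. lra. }
    assert (D - e * K <= 0); [|lra].
    destruct (Rle_dec (D - e * K) 0) as [?|Hn]; auto.
    exfalso. assert (0 < e * (D - e * K)) by (apply Rmult_lt_0_compat; lra). lra. }
  assert (HD : D <= 0).
  { destruct (Rle_dec D 0) as [?|Hn]; auto. exfalso.
    set (c := Rabs K + 1).
    assert (hc : 0 < c) by (unfold c; pose proof (Rabs_pos K); lra).
    set (e := Rmin e0 (D / (2 * c))).
    assert (he : 0 < e) by (unfold e; apply Rmin_glb_lt; [lra| apply Rdiv_lt_0_compat; lra]).
    assert (he1 : e <= e0) by apply Rmin_l.
    assert (he2 : e <= D / (2 * c)) by apply Rmin_r.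
    assert (he3 : e * c <= D / 2).
    { replace (D / 2) with (D / (2 * c) * c) by (field; lra).
      apply Rmult_le_compat_r; lra. }
    assert (eK : e * K <= e * c).
    { apply Rmult_le_compat_l; [lra|]. unfold c. pose proof (Rle_abs K). lra. }
    pose proof (Main e (conj he he1)). lra. }
  unfold jointly_P2. fold u v a b.
  fold A Byv Buy Bxv Bxu.
  unfold D in HD. nra.
Qed.
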